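(* Let $q\in\mathrm{prob}(\{0,1\}^2)$. The set $B:=\{(\pi_1,\chi^{(1)}_{1|1},\chi^{(2)}_{1|1}):(\pi,\chi)\in\Theta_2,\ \mu(\pi,\chi)=q\}$ is nonempty and equals the set of all $(\mathrm{Pr},\mathrm{Se}_1,\mathrm{Se}_2)\in[0,1]^3$ satisfying $-q_{10}\le\mathrm{Pr}(\mathrm{Se}_2-\mathrm{Se}_1)\le q_{01}$, $-q_{00}\le\mathrm{Pr}(\mathrm{Se}_1+\mathrm{Se}_2-1)\le q_{11}$, $\mathrm{Pr}-q_{0+}\le\mathrm{Pr}\,\mathrm{Se}_1\le q_{1+}$, and $\mathrm{Pr}-q_{+0}\le\mathrm{Pr}\,\mathrm{Se}_2\le q_{+1}$.
   Context: A subscript $+$ denotes summation over the replaced index, e.g. $q_{0+}=q_{00}+q_{01}$, $q_{+0}=q_{00}+q_{10}$. $\mathrm{prob}(\mathcal{X})$ is the set of probability densities on a finite set $\mathcal{X}$; $\mathrm{markov}(\mathcal{X},\mathcal{Y})$ the set of maps $(x,y)\mapsto p_{y|x}$ with $p_{\cdot|x}\in\mathrm{prob}(\mathcal{Y})$. $\Theta_2:=\mathrm{prob}(\{0,1\})\times\mathrm{markov}(\{0,1\},\{0,1\}^2)$, $\mu(\pi,\chi)_j:=\sum_{i=0}^1\pi_i\chi_{j|i}$ for $j\in\{0,1\}^2$, $\chi^{(1)}_{\iota|i}:=\chi_{\iota0|i}+\chi_{\iota1|i}$, $\chi^{(2)}_{\iota|i}:=\chi_{0\iota|i}+\chi_{1\iota|i}$.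 *)

(* Defs.v *)
From mathcomp Require Import all_boot all_order all_algebra.
Set Implicit Arguments. Unset Strict Implicit. Unset Printing Implicit Defensive.
Import Order.TTheory GRing.Theory Num.Theory.
Local Open Scope ring_scope.

Definition is_prob (R : numDomainType) (X : finType) (p : X -> R) : Prop :=
  (forall x, 0 <= p x) /\ \sum_(x : X) p x = 1.

Definition is_markov (R : numDomainType) (X Y : finType) (chi : X -> Y -> R) : Prop :=
  forall x, is_prob (chi x).

(* {0,1} is bool (false = 0, true = 1); {0,1}^2 is bool * bool. *)
Definition in_Theta2 (R : numDomainType) (pi : bool -> R) (chi : bool -> bool * bool -> R) : Prop :=
  is_prob pi /\ is_markov chi.

Definition mu (R : numDomainType) (pi : bool -> R) (chi : bool -> bool * bool -> R)
  (j : bool * bool) : R :=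
  \sum_(i : bool) pi i * chi i j.

Definition chi1 (R : numDomainType) (chi : bool -> bool * bool -> R) (iota i : bool) : R :=
  chi i (iota, false) + chi i (iota, true).

Definition chi2 (R : numDomainType) (chi : bool -> bool * bool -> R) (iota i : bool) : R :=
  chi i (false, iota) + chi i (true, iota).

Definition setB (R : numDomainType) (q : bool * bool -> R) (t : R * R * R) : Prop :=
  exists pi chi, in_Theta2 pi chi /\ (forall j, mu pi chi j = q j) /\
    t = (pi true, chi1 chi true true, chi2 chi true true).

Definition in_box (R : numDomainType) (q : bool * bool -> R) (t : R * R * R) : Prop :=
  let: (Pr, Se1, Se2) := t in
  let q00 := q (false, false) in let q01 := q (false, true) in
  let q10 := q (true, false) in let q11 := q (true, true) in
  (0 <= Pr <= 1) /\ (0 <= Se1 <= 1) /\ (0 <= Se2 <= 1) /\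
  (- q10 <= Pr * (Se2 - Se1) <= q01) /\
  (- q00 <= Pr * (Se1 + Se2 - 1) <= q11) /\
  (Pr - (q00 + q01) <= Pr * Se1 <= q10 + q11) /\
  (Pr - (q00 + q10) <= Pr * Se2 <= q01 + q11).

(* Main.v *)
Require Import Defs.
From mathcomp Require Import all_boot all_order all_algebra.
From mathcomp Require Import ring lra.
Import Order.TTheory GRing.Theory Num.Theory.
Local Open Scope ring_scope.

Lemma sum4 (R : realFieldType) (F : bool * bool -> R) :
  \sum_(p : bool * bool) F p = F (false,false) + F (false,true) + F (true,false) + F (true,true).
Proof.
rewrite (eq_bigr (fun p => F (p.1, p.2))); last by case.
rewrite -(pair_big xpredT xpredT (fun i j => F (i,j))) /=.
rewrite !big_bool /=. ring.
Qed.

Lemma forward (R : realFieldType) (q : bool * bool -> R) t :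
  setB q t -> in_box q t.
Proof.
case=> pi [chi [[[pi0 pis] chim] [hmu ->]]].
rewrite /in_box /chi1 /chi2.
have [a0 as1] := chim true. have [b0 bs1] := chim false.
rewrite sum4 in as1. rewrite sum4 in bs1. rewrite big_bool /= in pis.
have m := fun j => hmu j. rewrite /mu in m.
have eq00 := m (false,false). have eq01 := m (false,true).
have eq10 := m (true,false). have eq11 := m (true,true).
rewrite !big_bool /= in eq00 eq01 eq10 eq11.
have p1 := pi0 true. have p0 := pi0 false.
have ha00 := a0 (false,false). have ha01 := a0 (false,true).
have ha10 := a0 (true,false). have ha11 := a0 (true,true).
have hb00 := b0 (false,false). have hb01 := b0 (false,true).
have hb10 := b0 (true,false). have hb11 := b0 (true,true).
have pa00 := mulr_ge0 p1 ha00. have pa01 := mulr_ge0 p1 ha01.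
have pa10 := mulr_ge0 p1 ha10. have pa11 := mulr_ge0 p1 ha11.
have pb00 := mulr_ge0 p0 hb00. have pb01 := mulr_ge0 p0 hb01.
have pb10 := mulr_ge0 p0 hb10. have pb11 := mulr_ge0 p0 hb11.
have e1 : pi true * (chi true (false,false) + chi true (false,true) +
   chi true (true,false) + chi true (true,true)) = pi true by rewrite as1 mulr1.
rewrite !mulrDr in e1.
rewrite -eq00 -eq01 -eq10 -eq11.
repeat split; try (apply/andP; split); rewrite ?mulrDr ?mulrBr ?mulr1; lra.
Qed.

Lemma backward (R : realFieldType) (q : bool * bool -> R) (hq : is_prob q) t :
  in_box q t -> setB q t.
Proof.
case: t => [[P S1] S2] /=.
move=> [/andP[P0 P1] [/andP[S10 S11] [/andP[S20 S21] [/andP[h1 h2] [/andP[h3 h4]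
   [/andP[h5 h6] /andP[h7 h8]]]]]]].
case: hq => q0; rewrite sum4 => qs.
have q00 := q0 (false,false). have q01 := q0 (false,true).
have q10 := q0 (true,false). have q11 := q0 (true,true).
set Q00 := q (false,false) in q00 qs h1 h2 h3 h4 h5 h6 h7 h8 *.
set Q01 := q (false,true) in q01 qs h1 h2 h3 h4 h5 h6 h7 h8 *.
set Q10 := q (true,false) in q10 qs h1 h2 h3 h4 h5 h6 h7 h8 *.
set Q11 := q (true,true) in q11 qs h1 h2 h3 h4 h5 h6 h7 h8 *.
have u1 : P * S1 <= P by rewrite -{2}[P]mulr1 ler_wpM2l.
have u2 : P * S2 <= P by rewrite -{2}[P]mulr1 ler_wpM2l.
have v1 : 0 <= P * S1 by rewrite mulr_ge0.
have v2 : 0 <= P * S2 by rewrite mulr_ge0.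
pose x := Num.max (Num.max 0 (P * S1 + P * S2 - P))
                  (Num.max (P * S1 - Q10) (P * S2 - Q01)).
have xl1 : 0 <= x by rewrite !le_max lexx.
have xl2 : P * S1 + P * S2 - P <= x by rewrite !le_max lexx orbT.
have xl3 : P * S1 - Q10 <= x by rewrite !le_max lexx !orbT.
have xl4 : P * S2 - Q01 <= x by rewrite !le_max lexx !orbT.
have xu1 : x <= P * S1 by rewrite !ge_max; apply/andP; split; apply/andP; split; lra.
have xu2 : x <= P * S2 by rewrite !ge_max; apply/andP; split; apply/andP; split; lra.
have xu3 : x <= Q11 by rewrite !ge_max; apply/andP; split; apply/andP; split; lra.
have xu4 : x <= Q00 + (P * S1 + P * S2 - P) by rewrite !ge_max; apply/andP; split; apply/andP; split; lra.
pose T := if P == 0 then Num.max 0 (S1 + S2 - 1) else x / P.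
have PT : P * T = x.
  rewrite /T; case: eqP => [Pe|Pn0].
    rewrite Pe mul0r; apply/le_anti; rewrite xl1 /=.
    by move: xu1; rewrite Pe mul0r.
  rewrite mulrC divfK //; exact/eqP.
have T0 : 0 <= T.
  rewrite /T; case: eqP => [_|Pn0]; first by rewrite le_max lexx.
  by rewrite divr_ge0.
have TS1 : T <= S1.
  rewrite /T; case: eqP => [_|Pn0]; first by rewrite ge_max S10 /=; lra.
  have Pp : 0 < P by rewrite lt_def P0 andbT; apply/eqP.
  by rewrite ler_pdivrMr // mulrC.
have TS2 : T <= S2.
  rewrite /T; case: eqP => [_|Pn0]; first by rewrite ge_max S20 /=; lra.
  have Pp : 0 < P by rewrite lt_def P0 andbT; apply/eqP.
  by rewrite ler_pdivrMr // mulrC.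
have TS3 : S1 + S2 - 1 <= T.
  rewrite /T; case: eqP => [_|Pn0]; first by rewrite le_max lexx orbT.
  have Pp : 0 < P by rewrite lt_def P0 andbT; apply/eqP.
  rewrite ler_pdivlMr // mulrC; lra.
pose a := fun j : bool * bool => match j with
  | (true, true) => T | (true, false) => S1 - T
  | (false, true) => S2 - T | (false, false) => 1 - S1 - S2 + T end.
have Pa : forall j, P * a j <= q j.
  case=> [[] []]; rewrite /a /= ?mulrBr ?mulrDr ?mulr1 PT -?/Q00 -?/Q01 -?/Q10 -?/Q11; lra.
have a0 : forall j, 0 <= a j.
  by case=> [[] []]; rewrite /a /=; lra.
have as1 : a (false,false) + a (false,true) + a (true,false) + a (true,true) = 1.
  rewrite /a; ring.
pose b := fun j => if P == 1 then q j else (q j - P * a j) / (1 - P).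
have hmu : forall j, P * a j + (1 - P) * b j = q j.
  move=> j; rewrite /b; case: eqP => [P1e|Pn1].
    rewrite P1e subrr mul0r addr0 mul1r.
    have ex : x = Q11.
      apply/le_anti; rewrite xu3 /=. move: xl3; rewrite P1e !mul1r.
      move: h6; rewrite P1e mul1r; lra.
    have Tq : T = Q11 by move: PT; rewrite P1e mul1r ex.
    move: h5 h6 h7 h8 ex; rewrite P1e !mul1r => h5 h6 h7 h8 ex.
    case: j => [[] []]; rewrite /a /= Tq -?/Q00 -?/Q01 -?/Q10 -?/Q11; lra.
  rewrite [(1 - P) * _]mulrC divfK ?subr_eq0 1?eq_sym; [ring|exact/eqP].
exists (fun i => if i then P else 1 - P).
exists (fun i => if i then a else b).
split; [split; [split|] |split].
- by case=> //; lra.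
- by rewrite big_bool /=; ring.
- case; split.
  + exact: a0.
  + by rewrite sum4 as1.
  + move=> j; rewrite /b; case: eqP => [_|Pn1]; first exact: q0.
    have Pp : 0 < 1 - P by rewrite subr_gt0 lt_def P1 andbT eq_sym; apply/eqP.
    by apply: divr_ge0; rewrite subr_ge0 ?Pa.
  + rewrite sum4.
    case: (P =P 1) => [P1e|Pn1].
      by rewrite /b P1e eqxx.
    have Pp : 1 - P != 0 by rewrite subr_eq0 eq_sym; apply/eqP.
    apply: (mulfI Pp). rewrite mulr1 !mulrDr.
    have := hmu (false,false); have := hmu (false,true);
    have := hmu (true,false); have := hmu (true,true).
    have e : P * (a (false,false) + a (false,true) + a (true,false) + a (true,true)) = P.
      by rewrite as1 mulr1.
    move=> H1 H2 H3 H4.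
    have E : P * (a (false,false) + a (false,true) + a (true,false) + a (true,true)) +
      ((1 - P) * b (false, false) + (1 - P) * b (false, true) +
  (1 - P) * b (true, false) + (1 - P) * b (true, true)) =
      q (false,false) + q (false,true) + q (true,false) + q (true,true).
      rewrite -H1 -H2 -H3 -H4; ring.
    move: E; rewrite e -/Q00 -/Q01 -/Q10 -/Q11 qs. lra.
- move=> j; rewrite /mu big_bool /=; exact: hmu.
- by rewrite /chi1 /chi2 /a; congr (_, _, _); ring.
Qed.

Theorem lemma4 (R : realFieldType) (q : bool * bool -> R) (hq : is_prob q) :
  (exists t, setB q t) /\ (forall t : R * R * R, setB q t <-> in_box q t).
Proof.
split; last by move=> t; split; [exact: forward | exact: backward].
exists (0, 0, 0); apply: backward => //.
case: hq => q0 _.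
have := q0 (false,false); have := q0 (false,true);
have := q0 (true,false); have := q0 (true,true).
rewrite /in_box !mul0r !lexx /= !ler01 /= !oppr_le0 => -> -> -> -> /=.
by rewrite !subr_le0 !addr_ge0 ?q0.
Qed.
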